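(* Let $\mathbb{F}_q$ be a finite field with $\mathrm{char}(\mathbb{F}_q)>3$ and $3\mid q-1$, and let $z\in\mathbb{F}_q^\times$ be a non-cube. Then $\mathfrak{sl}_3(\mathbb{F}_q)$ has exactly two $J_3$-decompositions up to conjugacy, represented by $J_3(1,1)$ and $J_3(1,z)$. More precisely: $J_3(1,z^2)$ is conjugate to $J_3(1,z)$, $J_3(1,z)$ is not conjugate to $J_3(1,1)$, and every $J_3(a,b)$ with $a,b\in\mathbb{F}_q^\times$ is conjugate to one of $J_3(1,1)$, $J_3(1,z)$.
   Context: $\mathfrak{sl}_3(\mathbb{F}_q)$ is the Lie algebra of $3\times3$ traceless matrices over $\mathbb{F}_q$. Fix a primitive cube root of unity $u\in\mathbb{F}_q$. For nonzero $a,b\in\mathbb{F}_q$, $J_3(a,b)$ denotes the decomposition $\mathfrak{sl}_3(\mathbb{F}_q)=H_0\oplus H_1\oplus H_2\oplus H_3$, where $H_0$ is the subalgebra of traceless diagonal matrices and, for $j=1,2,3$ with $(\lambda_j,\mu_j)=(1,1),(u,u^2),(u^2,u)$ respectively, $H_j=\left\langle \begin{pmatrix}0&1&0\\0&0&\lambda_j a\\ \mu_j ab&0&0\end{pmatrix},\begin{pmatrix}0&0&1\\ \mu_j ab&0&0\\0&\lambda_j b&0\end{pmatrix}\right\rangle_{\mathbb{F}_q}$. A $J_3$-decomposition is any decomposition $J_3(a,b)$ with $a,b\in\mathbb{F}_q^\times$. Two such decompositions are conjugate if there is a Lie algebra automorphism of $\mathfrak{sl}_3(\mathbb{F}_q)$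 mapping each component of the first onto exactly one component of the second. *)

(* Defs.v *)
From HB Require Import structures.
From mathcomp Require Import all_boot all_order all_algebra all_fingroup all_field.
Set Implicit Arguments. Unset Strict Implicit. Unset Printing Implicit Defensive.
Import GRing.Theory.
Local Open Scope ring_scope.

Section J3.
Variable F : finFieldType.

Definition mx3 (a b c d e f g h k : F) : 'M[F]_3 :=
  \matrix_(i < 3, j < 3)
    nth 0 (nth [::] [:: [:: a; b; c]; [:: d; e; f]; [:: g; h; k]] i) j.

Definition sl3 : {set 'M[F]_3} := [set M | \tr M == 0].

Definition lie (A B : 'M[F]_3) : 'M[F]_3 := A *m B - B *m A.

Definition span2 (A B : 'M[F]_3) : {set 'M[F]_3} :=
  [set x *: A + y *: B | x : F, y : F].

Definition H0 : {set 'M[F]_3} := [set M | is_diag_mx M && (\tr M == 0)].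

Definition Hj (a b l m : F) : {set 'M[F]_3} :=
  span2 (mx3 0 1 0  0 0 (l * a)  (m * a * b) 0 0)
        (mx3 0 0 1  (m * a * b) 0 0  0 (l * b) 0).

Definition J3 (u a b : F) (i : 'I_4) : {set 'M[F]_3} :=
  match val i with
  | 0 => H0
  | 1 => Hj a b 1 1
  | 2 => Hj a b u (u ^+ 2)
  | _ => Hj a b (u ^+ 2) u
  end.

(* Lie algebra automorphism of sl_3(F): an F-linear map which maps sl_3
   bijectively onto sl_3 and preserves the bracket on sl_3.  (Only its
   restriction to sl_3 matters.) *)
Definition lie_aut (phi : 'M[F]_3 -> 'M[F]_3) : Prop :=
  [/\ forall (c : F) (A B : 'M[F]_3), phi (c *: A + B) = c *: phi A + phi B,
      {in sl3 &, injective phi},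
      phi @: sl3 = sl3
    & forall A B, A \in sl3 -> B \in sl3 -> phi (lie A B) = lie (phi A) (phi B)].

Definition conj_dec (D1 D2 : 'I_4 -> {set 'M[F]_3}) : Prop :=
  exists phi, lie_aut phi /\
    exists sigma : 'I_4 -> 'I_4, forall i, phi @: D1 i = D2 (sigma i).

End J3.

(* Main.v *)
Require Import Defs.
From HB Require Import structures.
From mathcomp Require Import all_boot all_order all_algebra all_fingroup all_field.
From mathcomp Require Import ring zify cyclic.
Import GRing.Theory.
Local Open Scope ring_scope.
Section S.
Variable F : finFieldType.
Implicit Types a b c d e f g h k : F.

Definition i0 : 'I_3 := ord0.
Definition i1 : 'I_3 := Ordinal (isT : (1 < 3)%N).
Definition i2 : 'I_3 := Ordinal (isT : (2 < 3)%N).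

Ltac mxent := apply/matrixP; case=> [[|[|[|?]]] ?] //; case=> [[|[|[|?]]] ?] //;
  rewrite !mxE ?big_ord_recl ?big_ord0 ?mxE /=.

Lemma mx3_mul a b c d e f g h k (a' b' c' d' e' f' g' h' k' : F) :
  mx3 a b c d e f g h k *m mx3 a' b' c' d' e' f' g' h' k' =
  mx3 (a*a'+b*d'+c*g') (a*b'+b*e'+c*h') (a*c'+b*f'+c*k')
      (d*a'+e*d'+f*g') (d*b'+e*e'+f*h') (d*c'+e*f'+f*k')
      (g*a'+h*d'+k*g') (g*b'+h*e'+k*h') (g*c'+h*f'+k*k').
Proof. mxent; ring. Qed.

Lemma mx3_add a b c d e f g h k (a' b' c' d' e' f' g' h' k' : F) :
  mx3 a b c d e f g h k + mx3 a' b' c' d' e' f' g' h' k' =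
  mx3 (a+a') (b+b') (c+c') (d+d') (e+e') (f+f') (g+g') (h+h') (k+k').
Proof. by mxent. Qed.

Lemma mx3_scale (x : F) a b c d e f g h k :
  x *: mx3 a b c d e f g h k = mx3 (x*a) (x*b) (x*c) (x*d) (x*e) (x*f) (x*g) (x*h) (x*k).
Proof. by mxent. Qed.

Lemma mx3_opp a b c d e f g h k :
  - mx3 a b c d e f g h k = mx3 (-a) (-b) (-c) (-d) (-e) (-f) (-g) (-h) (-k).
Proof. by mxent. Qed.

Lemma mx3_tr a b c d e f g h k : \tr (mx3 a b c d e f g h k) = a + e + k.
Proof. by rewrite /mxtrace !big_ord_recl big_ord0 !mxE /= addr0 addrA. Qed.

Lemma mx3_1 : (1%:M : 'M[F]_3) = mx3 1 0 0 0 1 0 0 0 1.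
Proof. by mxent. Qed.

Lemma mx3_0 : (0 : 'M[F]_3) = mx3 0 0 0 0 0 0 0 0 0.
Proof. by mxent. Qed.

Lemma mx3_eta (M : 'M[F]_3) : M = mx3 (M i0 i0) (M i0 i1) (M i0 i2)
  (M i1 i0) (M i1 i1) (M i1 i2) (M i2 i0) (M i2 i1) (M i2 i2).
Proof.
apply/matrixP => i j; rewrite !mxE.
case: i => [[|[|[|i]]] Hi] //; case: j => [[|[|[|j]]] Hj] //=; congr (M _ _); exact: val_inj.
Qed.

Lemma mx3_diag a b c d e f g h k :
  is_diag_mx (mx3 a b c d e f g h k) = [&& b==0, c==0, d==0, f==0, g==0 & h==0].
Proof.
apply/is_diag_mxP/idP.
  move=> H; have := H i0 i1 isT; have := H i0 i2 isT; have := H i1 i0 isT;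
  have := H i1 i2 isT; have := H i2 i0 isT; have := H i2 i1 isT.
  by rewrite !mxE /= => -> -> -> -> -> ->; rewrite !eqxx.
by case/and5P => /eqP-> /eqP-> /eqP-> /eqP-> /andP[/eqP-> /eqP->];
  case=> [[|[|[|i]]] Hi] //; case=> [[|[|[|j]]] Hj] //= _; rewrite mxE.
Qed.


Definition cj (g g' : 'M[F]_3) (M : 'M[F]_3) := g *m M *m g'.

Lemma cj_aut (g g' : 'M[F]_3) : g *m g' = 1%:M -> g' *m g = 1%:M -> lie_aut (cj g g').
Proof.
move=> gg' g'g; split.
- by move=> c A B; rewrite /cj mulmxDr mulmxDl -scalemxAr -scalemxAl.
- move=> A B _ _ /(congr1 (cj g' g)).
  by rewrite /cj !mulmxA g'g !mul1mx -!mulmxA g'g !mulmx1.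
- apply/setP => M; rewrite inE; apply/imsetP/idP => [[A]|trM].
    by rewrite inE /cj => trA ->; rewrite mxtrace_mulC mulmxA g'g mul1mx.
  exists (cj g' g M); last by rewrite /cj !mulmxA gg' mul1mx -mulmxA gg' mulmx1.
  by rewrite inE /cj mxtrace_mulC mulmxA gg' mul1mx.
- move=> A B _ _; rewrite /lie /cj mulmxBr mulmxBl.
  by congr (_ - _); rewrite !mulmxA -(mulmxA _ g' g) g'g mulmx1.
Qed.

Section LieAut.
Variable phi : 'M[F]_3 -> 'M[F]_3.
Hypothesis lin : forall (c : F) (A B : 'M[F]_3), phi (c *: A + B) = c *: phi A + phi B.

Lemma phi0 : phi 0 = 0.
Proof.
have := lin 1 0 0; rewrite !scale1r addr0 => /(congr1 (fun t => t - phi 0)).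
by rewrite addrK subrr => <-.
Qed.

Lemma phiZ c A : phi (c *: A) = c *: phi A.
Proof. by rewrite -[c *: A]addr0 lin phi0 addr0. Qed.

Lemma phiD A B : phi (A + B) = phi A + phi B.
Proof. by have := lin 1 A B; rewrite !scale1r. Qed.

Lemma phiB A B : phi (A - B) = phi A - phi B.
Proof. by rewrite phiD -scaleN1r phiZ scaleN1r. Qed.

Lemma span_img A B A' B' (al be : F) :
  phi A = al *: A' -> phi B = be *: B' -> al != 0 -> be != 0 ->
  phi @: span2 A B = span2 A' B'.
Proof.
move=> hA hB al0 be0; apply/setP => M; apply/imsetP/imset2P.
  case=> N /imset2P[x y _ _ ->] ->; exists (x * al) (y * be) => //.
  by rewrite phiD !phiZ hA hB !scalerA.
case=> x y _ _ ->; exists ((x / al) *: A + (y / be) *: B).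
  by apply/imset2P; exists (x / al) (y / be).
by rewrite phiD !phiZ hA hB !scalerA !mulfVK.
Qed.
End LieAut.

Lemma span2C (A B : 'M[F]_3) : span2 A B = span2 B A.
Proof.
by apply/setP => M; apply/imset2P/imset2P => -[x y _ _ ->]; exists y x => //; rewrite addrC.
Qed.

Lemma aut_comp (phi1 phi2 : 'M[F]_3 -> 'M[F]_3) : lie_aut phi1 -> lie_aut phi2 -> lie_aut (phi2 \o phi1).
Proof.
case=> l1 i1 s1 b1 [l2 i2 s2 b2].
have sl A : A \in sl3 F -> phi1 A \in sl3 F by move=> hA; rewrite -s1; apply: imset_f.
split.
- by move=> c A B /=; rewrite l1 l2.
- by move=> A B hA hB /= /i2 -/(_ (sl _ hA) (sl _ hB)) /i1; apply.
- by rewrite imset_comp s1 s2.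
- by move=> A B hA hB /=; rewrite b1 // b2 // sl.
Qed.

Lemma conj_trans (D1 D2 D3 : 'I_4 -> {set 'M[F]_3}) :
  conj_dec D1 D2 -> conj_dec D2 D3 -> conj_dec D1 D3.
Proof.
case=> p1 [a1 [s1 h1]] [p2 [a2 [s2 h2]]]; exists (p2 \o p1); split; first exact: aut_comp.
by exists (s2 \o s1) => i; rewrite imset_comp h1 h2.
Qed.

Lemma conj_id (D1 D2 : 'I_4 -> {set 'M[F]_3}) (phi : 'M[F]_3 -> 'M[F]_3) :
  lie_aut phi -> (forall i, phi @: D1 i = D2 i) -> conj_dec D1 D2.
Proof. by move=> a h; exists phi; split => //; exists id. Qed.


Lemma inH0 a b c d e f g h k : (mx3 a b c d e f g h k \in H0 F) =
  [&& b==0, c==0, d==0, f==0, g==0 & h==0] && (a + e + k == 0).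
Proof. by rewrite inE mx3_diag mx3_tr. Qed.

Lemma H0P (M : 'M[F]_3) : M \in H0 F -> exists a e k, M = mx3 a 0 0 0 e 0 0 0 k /\ a + e + k = 0.
Proof.
rewrite [M]mx3_eta inH0 => /andP[/and5P[/eqP-> /eqP-> /eqP-> /eqP-> /andP[/eqP-> /eqP->]] /eqP tr].
by do 3 eexists; split; first reflexivity.
Qed.

Ltac mx3_simpl := rewrite /cj ?mx3_mul ?mx3_add ?mx3_scale ?mx3_opp; congr mx3.

Lemma diag_conj (u a b d2 d3 : F) : d2 != 0 -> d3 != 0 ->
  conj_dec (J3 u a b) (J3 u (a * d2 ^+ 2 / d3) (b * d3 ^+ 2 / d2)).
Proof.
move=> n2 n3.
pose g := mx3 1 0 0 0 d2 0 0 0 d3; pose g' := mx3 1 0 0 0 d2^-1 0 0 0 d3^-1.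
have A : lie_aut (cj g g') by apply: cj_aut; rewrite mx3_1; mx3_simpl; field; by rewrite ?n2 ?n3.
have [lin _ _ _] := A; apply: (@conj_id _ _ _ A); case=> [[|[|[|[|i]]]] Hi] //=; rewrite /J3 /=.
- rewrite -[RHS]imset_id; apply: eq_in_imset => M /H0P[a0 [e0 [k0 [-> _]]]].
  by mx3_simpl; field; by rewrite ?n2 ?n3.
- apply: (span_img _ lin) (_ : _ = d2^-1 *: _) (_ : _ = d3^-1 *: _) _ _; rewrite ?invr_eq0 //;
    mx3_simpl; field; by rewrite ?n2 ?n3.
- apply: (span_img _ lin) (_ : _ = d2^-1 *: _) (_ : _ = d3^-1 *: _) _ _; rewrite ?invr_eq0 //;
    mx3_simpl; field; by rewrite ?n2 ?n3.
- apply: (span_img _ lin) (_ : _ = d2^-1 *: _) (_ : _ = d3^-1 *: _) _ _; rewrite ?invr_eq0 //;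
    mx3_simpl; field; by rewrite ?n2 ?n3.
Qed.


Lemma swap_conj (u a b : F) : conj_dec (J3 u a b) (J3 u b a).
Proof.
pose g := mx3 (F:=F) 1 0 0 0 0 1 0 1 0.
have gg : g *m g = 1%:M by rewrite mx3_1; mx3_simpl; ring.
have A : lie_aut (cj g g) by apply: cj_aut.
have inv M : cj g g (cj g g M) = M by rewrite /cj !mulmxA gg mul1mx -mulmxA gg mulmx1.
have [lin _ _ _] := A; apply: (@conj_id _ _ _ A); case=> [[|[|[|[|i]]]] Hi] //=; rewrite /J3 /=.
- have sub M : M \in H0 F -> cj g g M \in H0 F.
    move=> /H0P[a0 [e0 [k0 [-> h]]]].
    rewrite /cj !mx3_mul inH0 !(mul0r, mulr0, mul1r, mulr1, addr0, add0r) !eqxx /=.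
    by apply/eqP; rewrite -h; ring.
  apply/setP => M; apply/imsetP/idP => [[N hN ->]|hM]; first exact: sub.
  by exists (cj g g M); rewrite ?inv ?sub.
- rewrite /Hj [RHS]span2C; apply: (span_img _ lin) (_ : _ = 1 *: _) (_ : _ = 1 *: _) _ _; rewrite ?oner_eq0 //;
    mx3_simpl; ring.
- rewrite /Hj [RHS]span2C; apply: (span_img _ lin) (_ : _ = 1 *: _) (_ : _ = 1 *: _) _ _; rewrite ?oner_eq0 //;
    mx3_simpl; ring.
- rewrite /Hj [RHS]span2C; apply: (span_img _ lin) (_ : _ = 1 *: _) (_ : _ = 1 *: _) _ _; rewrite ?oner_eq0 //;
    mx3_simpl; ring.
Qed.

End S.
Section S.
Variable F : finFieldType.

Lemma Kfield (z : F) (X N : 'M[F]_3) (a1 a2 : F) :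
  ~ (exists w : F, w ^+ 3 = z) -> X ^+ 3 = z%:M ->
  N * (-1 + a1 *: X + a2 *: X ^+ 2) = 0 -> N = 0.
Proof.
move=> ncube X3 hN.
pose P : {poly F} := 'X^3 - z%:P.
pose f : {poly F} := -1 + a1 *: 'X + a2 *: 'X^2.
have szP : size P = 4 by rewrite size_XnsubC.
have irrP : irreducible_poly P.
  apply: cubic_irreducible; first by rewrite szP.
  move=> x; apply/negP; rewrite /root /P !hornerE => /eqP/eqP; rewrite subr_eq0 => /eqP hx.
  by apply: ncube; exists x.
have f0 : f`_0 = -1 by rewrite /f !coefE /=; ring.
have fn0 : f != 0 by apply/eqP => f0'; move: f0; rewrite f0' coef0 => /eqP; rewrite eq_sym oppr_eq0 oner_eq0.
have szf : (size f <= 3)%N.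
  apply/leq_sizeP => j hj; rewrite /f !coefE.
  by case: j hj => [|[|[|j]]] //= _; rewrite !mulr0 !addr0 oppr0.
have cop : coprimep f P.
  rewrite /coprimep; apply/negPn/negP => hd.
  have := irrP.2 _ hd (dvdp_gcdr f P) => /eqp_dvdl hdv.
  have : P %| f by rewrite -hdv dvdp_gcdl.
  move/(dvdp_leq fn0); rewrite szP => h; move: (leq_trans h szf).
  by [].
have [[u1 u2] /= huv] := Bezout_coprimepP _ _ cop.
have /size_poly1P[c c0 hc] : size (u1 * f + u2 * P) == 1%N.
  by rewrite (eqp_size huv) size_poly1.
have hP : horner_mx X P = 0 by rewrite /P rmorphB /= rmorphXn /= horner_mx_X horner_mx_C X3 subrr.
have hf : horner_mx X f = -1 + a1 *: X + a2 *: X ^+ 2.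
  by rewrite /f !rmorphD /= rmorphN /= rmorph1 !horner_mxZ horner_mx_X rmorphXn /= horner_mx_X.
have := congr1 (horner_mx X) hc; rewrite (mulrC u1) rmorphD !rmorphM /= hP mulr0 addr0 horner_mx_C hf.
move/(congr1 (fun M => N * M)); rewrite mulrA hN mul0r.
move/esym/eqP; rewrite -scalemx1 -scalerAr mulr1 scaler_eq0 (negPf c0) /= => /eqP //.
Qed.
End S.
Section S.
Variable F : finFieldType.

Lemma lin2 (A B : 'M[F]_3) a b c d :
  (a *: A + b *: B) - (c *: A + d *: B) = (a - c) *: A + (b - d) *: B.
Proof. by rewrite !scalerBl opprD !addrA; congr (_ + _); rewrite -!addrA; congr (_ + _); rewrite addrC. Qed.

Lemma stepc (X P : 'M[F]_3) (x y w : F) :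
  X *m P = w *: (P *m X) ->
  (x *: X + y *: (X *m X)) *m P - P *m (x *: X + y *: (X *m X)) = P ->
  P *m ((x * (w - 1)) *: X + (y * (w ^+ 2 - 1)) *: (X *m X) - 1%:M) = 0.
Proof.
move=> XP E.
have XXP : X *m X *m P = w ^+ 2 *: (P *m X *m X).
  by rewrite -mulmxA XP -scalemxAr mulmxA XP -scalemxAl scalerA -expr2.
move: E; rewrite mulmxDl mulmxDr -!scalemxAl -!scalemxAr XXP XP !scalerA mulmxA.
rewrite mulmxBr mulmxDr -!scalemxAr mulmx1 mulmxA => E.
rewrite -{3}E lin2 lin2 (_ : x * (w - 1) - (x * w - x) = 0); last by ring.
by rewrite (_ : y * (w ^+ 2 - 1) - (y * w ^+ 2 - y) = 0) ?scale0r ?addr0 //; ring.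
Qed.
End S.
Section S.
Variable F : finFieldType.

Ltac mx3_simpl2 := rewrite /cj ?(mx3_mul, mx3_add, mx3_scale, mx3_opp); congr mx3.

Lemma Llin0 (h : 'M[F]_3) (c : F) A B : h *m A - A *m h = A -> h *m B - B *m h = B ->
    h *m (c *: A + B) - (c *: A + B) *m h = c *: A + B.
Proof.
  move=> EA EB; rewrite mulmxDr mulmxDl -scalemxAr -scalemxAl.
  by rewrite opprD addrACA -scalerBr EA EB.
Qed.

Lemma lin3 (C A B : 'M[F]_3) a1 a2 a3 b1 b2 b3 :
  (C + a1 *: A + b1 *: B) + (C + a2 *: A + b2 *: B) + (C + a3 *: A + b3 *: B) =
  3%:R *: C + (a1 + a2 + a3) *: A + (b1 + b2 + b3) *: B.
Proof.
rewrite (AC (3*3*3) ((1*4*7)*(2*5*8)*(3*6*9))) /= -!scalerDl.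
by rewrite scaler_nat mulrS mulr2n addrA [C + C + C]addrC addrA.
Qed.

Lemma nonsplit (u z x y : F) (C : 'M[F]_3) : 3.-primitive_root u -> 3%:R != 0 :> F ->
  z != 0 -> ~ (exists w : F, w ^+ 3 = z) ->
  let X := mx3 0 1 0 0 0 1 z 0 0 in let h := x *: X + y *: (X *m X) in
  h *m C - C *m h = C -> C = 0.
Proof.
move=> pu n3 z0 ncube X h E.
pose Xi := mx3 (F:=F) 0 0 z^-1 1 0 0 0 1 0.
have XXi : X *m Xi = 1%:M by rewrite mx3_1 /X /Xi; mx3_simpl2; field.
have XiX : Xi *m X = 1%:M by rewrite mx3_1 /X /Xi; mx3_simpl2; field.
have X3 : X *m X *m X = z%:M by rewrite -scalemx1 mx3_1 /X; mx3_simpl2; ring.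
have Xi3 : Xi *m Xi *m Xi = z^-1%:M by rewrite -scalemx1 mx3_1 /Xi; mx3_simpl2; field.
have hX : h *m X = X *m h by rewrite /h /X; mx3_simpl2; ring.
have hXi : h *m Xi = Xi *m h by rewrite /h /X /Xi; mx3_simpl2; field.
pose T M := X *m M *m Xi.
have Lt M : h *m M - M *m h = M -> h *m T M - T M *m h = T M.
  move=> EM; rewrite /T -[in RHS]EM mulmxBr mulmxBl !mulmxA hX.
  by rewrite -[X *m M *m Xi *m h]mulmxA -hXi !mulmxA.
have Llin := @Llin0 h.
have T3 M : T (T (T M)) = M.
  have -> : T (T (T M)) = X *m X *m X *m M *m (Xi *m Xi *m Xi) by rewrite /T !mulmxA.
  by rewrite X3 Xi3 mul_scalar_mx mul_mx_scalar scalerA mulrC mulfV // scale1r.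
have Tlin (c : F) A B : T (c *: A + B) = c *: T A + T B.
  by rewrite /T mulmxDr mulmxDl -scalemxAr -scalemxAl.
pose P w := C + (w ^+ 2) *: T C + w *: T (T C).
have PE w : h *m P w - P w *m h = P w.
  have -> : P w = w *: T (T C) + ((w ^+ 2) *: T C + C) by rewrite /P addrC (addrC C).
  apply: (@Llin0 h); first exact: (Lt _ (Lt _ E)).
  by apply: (@Llin0 h); [exact: (Lt _ E)|].
have PT w : w ^+ 3 = 1 -> X *m P w = w *: (P w *m X).
  move=> w3.
  have : T (P w) = w *: P w.
    have -> : P w = w *: T (T C) + ((w ^+ 2) *: T C + C) by rewrite /P addrC (addrC C).
    rewrite Tlin Tlin T3 !scalerDr !scalerA -expr2 -exprS w3 scale1r.
    by rewrite addrC -addrA.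
  rewrite /T => /(congr1 (fun M => M *m X)); rewrite -mulmxA XiX mulmx1 => ->.
  by rewrite scalemxAl.
have P0 w : w ^+ 3 = 1 -> P w = 0.
  move=> w3.
  have := @stepc F X (P w) x y w (PT w w3) (PE w).
  rewrite -[P w *m _]/(P w * _) => H.
  apply: (@Kfield F z X (P w) (x * (w - 1)) (y * (w ^+ 2 - 1))) => //.
    by rewrite !exprS expr0 mulr1 mulrA.
  by rewrite -H; congr (_ * _); rewrite [RHS]addrC [RHS]addrA.
have u3 : u ^+ 3 = 1 := prim_expr_order pu.
have u1 : u != 1 by rewrite -(expr1 u) -(prim_order_dvd pu).
have su : 1 + u + u ^+ 2 = 0.
  have : (u - 1) * (1 + u + u ^+ 2) == 0.
    have e : (u - 1) * (1 + u + u ^+ 2) = u ^+ 3 - 1 by ring.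
    by rewrite e u3 subrr.
  by rewrite mulf_eq0 subr_eq0 (negPf u1) /= => /eqP.
have : P 1 + P u + P (u ^+ 2) = 0.
  by rewrite P0 ?expr1n // P0 // P0 ?addr0 // -exprM mulnC exprM u3 expr1n.
rewrite /P lin3 (_ : 1 ^+ 2 + u ^+ 2 + u ^+ 2 ^+ 2 = 0); last first.
  by rewrite -su; ring: u3.
rewrite (_ : 1 + u + u ^+ 2 = 0) // !scale0r !addr0 => /eqP.
by rewrite scaler_eq0 (negPf n3) /= => /eqP.
Qed.

Lemma cube_class (z w : F) : ~ (exists v : F, v ^+ 3 = z) -> z != 0 -> w != 0 ->
  exists j : nat, (j < 3)%N /\ exists v, w * z ^+ j = v ^+ 3.
Proof.
move=> ncube z0 w0.
pose n := #|F|.-1.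
have cardF : #|F| = n.+1 by rewrite prednK //; apply/card_gt0P; exists 0.
have n0 : (0 < n)%N by rewrite /n -(cardC1 (0 : F)); apply/card_gt0P; exists 1; rewrite !inE oner_eq0.
have unity (x : F) : x != 0 -> x ^+ n = 1.
  by move=> x0; apply: (mulfI x0); rewrite mulr1 -exprS -cardF expf_card.
have : has n.-primitive_root (enum (predC1 (0 : F))).
  apply: has_prim_root => //; last by rewrite -cardE (cardC1 (0 : F)).
    by apply/allP => x; rewrite mem_enum !inE => x0; rewrite unity_rootE unity.
  exact: enum_uniq.
case/hasP => g _ pg.
have [[e he] ze] := prim_rootP pg (unity z z0).
have [[i hi] wi] := prim_rootP pg (unity w w0).
rewrite /= in ze wi.
have ne : ~~ (3 %| e)%N.
  apply/negP => /divnK de; apply: ncube; exists (g ^+ (e %/ 3)).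
  by rewrite -exprM de ze.
have [j [hj dj]] : exists j, (j < 3)%N /\ (3 %| i + e * j)%N.
  have : (i %% 3 = 0 \/ i %% 3 = 1 \/ i %% 3 = 2)%N by lia.
  have : (e %% 3 = 1 \/ e %% 3 = 2)%N by lia.
  case=> he3 [hi3|[hi3|hi3]].
  - by exists 0%N; split => //; lia.
  - by exists 2%N; split => //; lia.
  - by exists 1%N; split => //; lia.
  - by exists 0%N; split => //; lia.
  - by exists 1%N; split => //; lia.
  - by exists 2%N; split => //; lia.
exists j; split => //; exists (g ^+ ((i + e * j) %/ 3)).
by rewrite -exprM divnK // wi ze -exprM -exprD.
Qed.


Lemma mx3_neq0 a b c d e f g h k : a != 0 -> mx3 (F:=F) a b c d e f g h k != 0.
Proof.
move=> a0; apply/eqP => /matrixP /(_ i0 i0); rewrite !mxE /= => /eqP; by rewrite (negPf a0).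
Qed.

Lemma split_comp (u : F) (k : 'I_4) : 3.-primitive_root u ->
  exists h C, [/\ h \in J3 u 1 1 k, C \in sl3 F, C != 0 & lie h C = C].
Proof.
move=> pu.
have u3 : u ^+ 3 = 1 := prim_expr_order pu.
have u1 : u != 1 by rewrite -(expr1 u) -(prim_order_dvd pu).
have su : 1 + u + u ^+ 2 = 0.
  have : (u - 1) * (1 + u + u ^+ 2) == 0.
    have e : (u - 1) * (1 + u + u ^+ 2) = u ^+ 3 - 1 by ring.
    by rewrite e u3 subrr.
  by rewrite mulf_eq0 subr_eq0 (negPf u1) /= => /eqP.
have u10 : u - 1 != 0 by rewrite subr_eq0.
have gen (l m : F) : l * m = 1 -> exists h C,
    [/\ h \in Hj 1 1 l m, C \in sl3 F, C != 0 & lie h C = C].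
  move=> lm.
  pose X := mx3 (F:=F) 0 1 0 0 0 (l * 1) (m * 1 * 1) 0 0.
  pose C := mx3 (F:=F) 1 1 l (u * (l * m)) u (u * l) (u ^+ 2 * m) (u ^+ 2 * m) (u ^+ 2).
  exists ((u - 1)^-1 *: X), C; split.
  - apply/imset2P; exists (u - 1)^-1 0 => //; by rewrite scale0r addr0.
  - by rewrite inE mx3_tr su.
  - exact: mx3_neq0 (oner_neq0 _).
  - have : lie X C = (u - 1) *: C.
      rewrite /lie /X /C; mx3_simpl2; ring: u3 lm.
    rewrite /lie -!scalemxAl -!scalemxAr -scalerBr => ->.
    by rewrite scalerA mulVf // scale1r.
case: k => [[|[|[|[|k]]]] hk] //; rewrite /J3 /=.
- exists (mx3 1 0 0 0 0 0 0 0 (-1)), (mx3 0 1 0 0 0 0 0 0 0); split.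
  + by rewrite inH0 !eqxx /= addr0 subrr.
  + by rewrite inE mx3_tr !addr0.
  + apply/eqP => /matrixP /(_ i0 i1); rewrite !mxE /= => /eqP; by rewrite oner_eq0.
  + by rewrite /lie; mx3_simpl2; ring.
- by apply: gen; rewrite mulr1.
- by apply: gen; rewrite -exprS.
- by apply: gen; rewrite mulrC -exprS.
Qed.


Lemma not_conj (u z : F) : 3.-primitive_root u -> 3%:R != 0 :> F -> z != 0 ->
  ~ (exists w : F, w ^+ 3 = z) -> ~ conj_dec (J3 u 1 z) (J3 u 1 1).
Proof.
move=> pu n3 z0 ncube [phi [[lin inj img br] [sigma hs]]].
pose k1 : 'I_4 := Ordinal (isT : (1 < 4)%N).
have [h [C [hh hC C0 hl]]] := split_comp u (sigma k1) pu.
move: hh; rewrite -hs => /imsetP [h' hh' eh].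
move: hC; rewrite -img => /imsetP [C' hC' eC].
move: hh'; rewrite /J3 /= => /imset2P [x y _ _ eh'].
pose X := mx3 (F:=F) 0 1 0 0 0 1 z 0 0.
have eh2 : h' = x *: X + y *: (X *m X).
  by rewrite eh'; congr (_ *: _ + _ *: _); rewrite /X; mx3_simpl2; ring.
have h'sl : h' \in sl3 F.
  by rewrite eh2 inE /X; rewrite ?(mx3_mul, mx3_add, mx3_scale) mx3_tr; apply/eqP; ring.
have lsl A B : lie A B \in sl3 F.
  by rewrite inE /lie raddfB /= mxtrace_mulC subrr.
have subsl A B : A \in sl3 F -> B \in sl3 F -> A - B \in sl3 F.
  by rewrite !inE raddfB /= => /eqP-> /eqP->; rewrite subrr.
have : phi (lie h' C' - C') = phi 0.
  by rewrite (@phiB F phi lin) br // -eh -eC hl (@phi0 F phi lin) subrr.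
have sl0 : (0 : 'M[F]_3) \in sl3 F by rewrite inE raddf0.
move/inj => /(_ (subsl _ _ (lsl _ _) hC') sl0) /eqP; rewrite subr_eq0 => /eqP E.
have : C' = 0.
  have NS := @nonsplit u z x y C' pu n3 z0 ncube; simpl in NS; apply: NS.
  by move: E; rewrite /lie eh2.
by move=> C'0; move: C0; rewrite eC C'0 (@phi0 F phi lin) eqxx.
Qed.

End S.
Arguments conj_trans {F D1 D2 D3}.
Arguments swap_conj {F}.
Arguments diag_conj {F} u a b {d2 d3}.
Arguments cube_class {F z w}.
Arguments not_conj {F u z}.

Theorem theorem3p11 (F : finFieldType) (u z : F) :
  (forall p : nat, p \in [pchar F] -> (3 < p)%N) ->
  (3 %| #|F|.-1)%N ->
  3.-primitive_root u ->
  z != 0 -> ~ (exists w : F, w ^+ 3 = z) ->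
  [/\ conj_dec (J3 u 1 (z ^+ 2)) (J3 u 1 z),
      ~ conj_dec (J3 u 1 z) (J3 u 1 1)
    & forall a b : F, a != 0 -> b != 0 ->
        conj_dec (J3 u a b) (J3 u 1 1) \/ conj_dec (J3 u a b) (J3 u 1 z)].
Proof.
move=> hchar _ pu z0 ncube.
have n3 : 3%:R != 0 :> F.
  apply/negP => h3; have := hchar 3%N; rewrite inE /= h3 => /(_ isT).
  by [].
have P1 : conj_dec (J3 u 1 (z ^+ 2)) (J3 u 1 z).
  apply: (conj_trans (swap_conj u 1 (z ^+ 2))).
  have := diag_conj u (z ^+ 2) 1 (invr_neq0 z0) (oner_neq0 F).
  rewrite (_ : z ^+ 2 * z^-1 ^+ 2 / 1 = 1); last by field; rewrite ?z0 ?oner_neq0.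
  rewrite (_ : 1 * 1 ^+ 2 / z^-1 = z) //; field; by rewrite ?z0 ?oner_neq0.
split => //; first exact: (not_conj pu n3 z0 ncube).
move=> a b a0 b0.
have w0 : (a ^+ 2 * b)^-1 != 0 by rewrite invr_eq0 mulf_neq0 // expf_neq0.
have [j [hj [v hv]]] := cube_class ncube z0 w0.
have v0 : v != 0.
  apply/eqP => v00; move: hv; rewrite v00 expr0n /= => /eqP.
  by rewrite mulf_eq0 (negPf w0) expf_eq0 (negPf z0) andbF.
have av0 : a * v ^+ 2 != 0 by rewrite mulf_neq0 // expf_neq0.
have := diag_conj u a b v0 av0.
rewrite (_ : a * v ^+ 2 / (a * v ^+ 2) = 1) ?divff //.
rewrite (_ : b * (a * v ^+ 2) ^+ 2 / v = z ^+ j); last first.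
  apply: (mulIf v0); rewrite mulfVK //.
  have ab0 : a ^+ 2 * b != 0 by rewrite mulf_neq0 // expf_neq0.
  have -> : z ^+ j = a ^+ 2 * b * v ^+ 3 by rewrite -hv mulrA mulfV ?mul1r.
  ring.
case: j hj {hv} => [|[|[|j]]] // _ H; [left|right|right] => //.
exact: (conj_trans H P1).
Qed.
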